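(* Let $m\geq1$ and $e\geq0$ with $m\equiv 2^e-1 \pmod{2^{e+1}}$ (i.e. $e$ is the length of the final block of consecutive ones in the binary expansion of $m$; $e=0$ iff $m$ is even). Then $G(m)\leq 2^e-1$, with equality if $m$ is even or if $m=2^e-1$. In fact $G(m,s)\leq 2^e-1$ for all $s\geq\max\{(m+1)/2^e,2\}$. Specifically, if $m>2^e-1$ and $\sigma=(m+1)/2^e$ (an integer greater than $2$), then the product of $\sigma$-th zero-divisors $$(x_1+x_\sigma)^{m+2^e}(x_2+x_\sigma)^{m+2^e}\cdots(x_{\sigma-1}+x_\sigma)^{m+2^e}\in H^*((\mathbb{R}\mathrm{P}^m)^{\times\sigma};\mathbb{Z}_2)$$ is nonzero.
   Context: $H^*((\mathbb{R}\mathrm{P}^m)^{\times s};\mathbb{Z}_2)=\mathbb{Z}_2[x_1,\ldots,x_s]/(x_i^{m+1})$ with $x_i$ the pullback of the generator of $H^1(\mathbb{R}\mathrm{P}^m;\mathbb{Z}_2)$ under the $i$-th projection. The $s$-th zero-divisors are the elements of the kernel of the map $\Delta_s^*$ induced by the diagonal $\mathbb{R}\mathrm{P}^m\to(\mathbb{R}\mathrm{P}^m)^{\times s}$, and $\operatorname{zcl}_s(\mathbb{R}\mathrm{P}^m)$ is the maximal number of $s$-th zero-divisors with nonzero product. $G(m,s)=sm-\operatorname{zcl}_s(\mathbb{R}\mathrm{P}^m)$; the sequence $G(m,2)\geq G(m,3)\geq\cdots\geq0$ is non-increasing, and $G(m)$ denotes its eventual (stable) value. *)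

(* Defs.v *)
From mathcomp Require Import all_boot all_order all_algebra.
From mathcomp Require Import mpoly.
From Stdlib Require Import ClassicalDescription.
Set Implicit Arguments. Unset Strict Implicit. Unset Printing Implicit Defensive.
Import Order.TTheory GRing.Theory Num.Theory.
Local Open Scope ring_scope.

(* H^*((RP^m)^s; Z_2) = Z_2[x_1..x_s]/(x_i^{m+1}).  Elements are represented by
   polynomials in {mpoly 'F_2[s]} (variable x_{i+1} is 'X_i, i : 'I_s). *)

Definition in_trunc_ideal (m s : nat) (p : {mpoly 'F_2[s]}) : Prop :=
  exists q : 'I_s -> {mpoly 'F_2[s]}, p = \sum_(i < s) q i * 'X_i ^+ m.+1.

Definition diag_rep (s : nat) (p : {mpoly 'F_2[s]}) : {poly 'F_2} :=
  mmap (@polyC 'F_2) (fun _ : 'I_s => 'X) p.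

(* s-th zero-divisor: Delta_s^*(p) = 0 in Z_2[x]/(x^{m+1}) = H^*(RP^m;Z_2). *)
Definition zero_divisor (m s : nat) (p : {mpoly 'F_2[s]}) : Prop :=
  ('X ^+ m.+1 %| diag_rep p)%R.

Definition zcl_witness (m s k : nat) : Prop :=
  exists f : 'I_k -> {mpoly 'F_2[s]},
    (forall i, @zero_divisor m s (f i)) /\
    ~ @in_trunc_ideal m s (\prod_(i < k) f i).

Definition zcl_witnessb (m s k : nat) : bool :=
  if excluded_middle_informative (zcl_witness m s k) then true else false.

(* Any product of more than s*m zero-divisors
   vanishes (zero-divisors have no constant term, and the top degree of
   H^*((RP^m)^s) is s*m), so the maximum over k <= s*m is the true maximum. *)
Definition zcl (m s : nat) : nat :=
  (\max_(k < (s * m).+1 | zcl_witnessb m s k) k)%N.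

Definition G (m s : nat) : nat := (s * m - zcl m s)%N.

Definition G_stable (m g : nat) : Prop :=
  exists s0 : nat, forall s : nat, (s0 <= s)%N -> G m s = g.

(* Main.v *)
Require Import Defs.
From mathcomp Require Import all_boot all_order all_algebra.
From mathcomp Require Import mpoly.
From mathcomp Require Import zify.
From Stdlib Require Import Classical ClassicalDescription.
Set Implicit Arguments. Unset Strict Implicit. Unset Printing Implicit Defensive.
Import Order.TTheory GRing.Theory Num.Theory.
Local Open Scope ring_scope.

Lemma bin_even_par A : forall B,
  odd 'C(A.*2, B.*2) = odd 'C(A, B) /\ ~~ odd 'C(A.*2, (B.*2).+1).
Proof.
elim: A => [|A IH] B.
  by rewrite double0 !bin0n double_eq0; case: B.
rewrite doubleS; split.
  case: B => [|b]; first by rewrite !bin0.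
  have [h1 h2] := IH b; have [h3 h4] := IH b.+1.
  rewrite doubleS in h3 h4.
  rewrite doubleS !binS !oddD h3 (negbTE h2) h1.
  by case: (odd _); case: (odd _).
case: B => [|b].
  by rewrite bin1 /= odd_double.
have [h1 h2] := IH b; have [h3 h4] := IH b.+1.
rewrite doubleS in h3 h4.
rewrite doubleS !binS !oddD (negbTE h4) (negbTE h2).
by case: (odd _).
Qed.

Lemma bin_odd_par A B : odd 'C((A.*2).+1, B.*2) = odd 'C(A, B).
Proof.
case: B => [|b]; first by rewrite !bin0.
have [h1 h2] := bin_even_par A b; have [h3 h4] := bin_even_par A b.+1.
by rewrite doubleS binS oddD h3 (negbTE h2) addbF.
Qed.

Lemma bin_pow2_odd e j : odd j -> odd 'C(j * 2 ^ e + (2 ^ e - 1), 2 ^ e).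
Proof.
elim: e j => [|e IH] j oj; first by rewrite expn0 muln1 subnn addn0 bin1.
have X0 : (0 < 2 ^ e)%N by rewrite expn_gt0.
have -> : (j * 2 ^ e.+1 + (2 ^ e.+1 - 1) = ((j * 2 ^ e + (2 ^ e - 1)).*2).+1)%N.
  rewrite expnS -!muln2; nia.
by rewrite expnS mul2n bin_odd_par IH.
Qed.

Lemma F2_nat n : (n%:R : 'F_2) = (odd n)%:R.
Proof. by rewrite -(@Fp_nat_mod 2) // modn2. Qed.
Section Ideal.
Variables (m s : nat).
Local Notation MP := {mpoly 'F_2[s]}.
Local Notation I := (@in_trunc_ideal m s).

Lemma inI0 : I 0.
Proof. by exists (fun _ => 0); rewrite big1 // => i _; rewrite mul0r. Qed.

Lemma inID p q : I p -> I q -> I (p + q).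
Proof.
case=> a ->; case=> b ->; exists (fun i => a i + b i).
by rewrite -big_split /=; apply: eq_bigr => i _; rewrite mulrDl.
Qed.

Lemma inIMl r p : I p -> I (r * p).
Proof.
case=> a ->; exists (fun i => r * a i).
by rewrite mulr_sumr; apply: eq_bigr => i _; rewrite mulrA.
Qed.

Lemma inIMr r p : I p -> I (p * r).
Proof. by rewrite mulrC; apply: inIMl. Qed.

Lemma inI_sum (T : Type) (l : seq T) (F : T -> MP) :
  (forall x, I (F x)) -> I (\sum_(x <- l) F x).
Proof.
move=> h; elim: l => [|x l IH]; first by rewrite big_nil; apply: inI0.
by rewrite big_cons; apply: inID.
Qed.

Lemma mcoeffMXg (p : MP) nu mu :
  (p * 'X_[nu])@_mu = if (nu <= mu)%MM then p@_(mu - nu) else 0.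
Proof.
case: ifP => h; first by rewrite -{1}(submK h) addmC mcoeffMX.
apply: memN_msupp_eq0; move: h; apply: contraFN.
rewrite (perm_mem (msuppMX p nu)) => /mapP [mu' _ ->]; exact: lem_addr.
Qed.

Lemma XUn (i : 'I_s) k : ('X_i : MP) ^+ k = 'X_[U_(i) *+ k].
Proof. by rewrite mpolyXn. Qed.

Lemma inIX (mu : 'X_{1..s}) i : (m < mu i)%N -> I 'X_[mu].
Proof.
move=> h.
have le : (U_(i) *+ m.+1 <= mu)%MM.
  apply/mnm_lepP => j; rewrite mulmnE mnm1E.
  by case: eqP => [<-|]; rewrite ?mul1n ?mul0n.
rewrite -(submK le) mpolyXD -XUn.
exists (fun j => if j == i then 'X_[mu - U_(i) *+ m.+1] else 0).
rewrite (bigD1 i) //= eqxx big1 ?addr0 // => j /negbTE ->; by rewrite mul0r.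
Qed.

Lemma inI_coef p :
  I p <-> (forall mu : 'X_{1..s}, (forall i, mu i <= m)%N -> p@_mu = 0).
Proof.
split.
  case=> a -> mu hmu; rewrite raddf_sum /= big1 // => i _.
  rewrite XUn mcoeffMXg; case: ifP => // /mnm_lepP /(_ i).
  by rewrite mulmnE mnm1E eqxx mul1n => h; have := hmu i; lia.
move=> h; rewrite (mpolyE p); apply: inI_sum => mu.
case: (boolP [exists i, (m < mu i)%N]) => [/existsP [i Hi]|/existsPn H].
  by rewrite -mul_mpolyC; apply: inIMl; apply: (inIX Hi).
by rewrite h ?scale0r; [apply: inI0| move=> i; have := H i; rewrite -leqNgt].
Qed.

Lemma notinI p : ~ I p <-> exists mu : 'X_{1..s}, (forall i, mu i <= m)%N /\ p@_mu != 0.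
Proof.
rewrite inI_coef; split.
  move=> H; apply: NNPP => H2; apply: H => mu hmu; apply/eqP; apply: NNPP => H3.
  by apply: H2; exists mu; split => //; apply/negP.
by case=> mu [h1 h2] H; move: h2; rewrite H.
Qed.

Definition noninv (i : 'I_s) (p : MP) := forall nu, nu \in msupp p -> nu i = 0%N.

Lemma noninvC i c : noninv i c%:MP.
Proof. by move=> nu; rewrite msuppC; case: eqP => // _; rewrite inE => /eqP ->; rewrite mnm0E. Qed.

Lemma noninv1 i : noninv i 1.
Proof. exact: noninvC. Qed.

Lemma noninvX i j : j != i -> noninv i 'X_j.
Proof. by move=> h nu; rewrite msuppX inE => /eqP ->; rewrite mnm1E (negbTE h). Qed.

Lemma noninvD i p q : noninv i p -> noninv i q -> noninv i (p + q).
Proof. by move=> hp hq nu /msuppD_le; rewrite mem_cat => /orP [/hp|/hq]. Qed.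

Lemma noninvM i p q : noninv i p -> noninv i q -> noninv i (p * q).
Proof.
move=> hp hq nu /msuppM_le /allpairsP [[a b] /= [ha hb ->]].
by rewrite mnmDE hp ?hq.
Qed.

Lemma noninvXn i p k : noninv i p -> noninv i (p ^+ k).
Proof.
move=> h; elim: k => [|k IH]; first by rewrite expr0; apply: noninv1.
by rewrite exprS; apply: noninvM.
Qed.

Lemma noninv_prod i (T : Type) (l : seq T) (P : pred T) (F : T -> MP) :
  (forall x, noninv i (F x)) -> noninv i (\prod_(x <- l | P x) F x).
Proof.
move=> h; apply: (big_ind (noninv i)) => //; [exact: noninv1|exact: noninvM].
Qed.

Lemma leaf (P : MP) (i c : 'I_s) N a (mu : 'X_{1..s}) :
  i != c -> noninv i P -> mu i = a -> (a <= N)%N -> (N - a <= mu c)%N ->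
  (P * ('X_i + 'X_c) ^+ N)@_mu =
    ('C(N, a))%:R * P@_(mu - U_(i) *+ a - U_(c) *+ (N - a)).
Proof.
move=> ic hP hmu haN hc.
have ci : (c == i) = false by rewrite eq_sym (negbTE ic).
rewrite addrC exprDn mulr_sumr raddf_sum /=.
have hN : (a < N.+1)%N by [].
rewrite (bigD1 (Ordinal hN)) //= big1 ?addr0.
  rewrite mulrnAr mcoeffMn !XUn -mpolyXD mcoeffMXg.
  have -> : (U_(c) *+ (N - a) + U_(i) *+ a <= mu)%MM.
    apply/mnm_lepP => l; rewrite mnmDE !mulmnE !mnm1E.
    case: (eqVneq c l) => [<-|cl]; first by rewrite (negbTE ic) /= mul1n mul0n addn0.
    case: (eqVneq i l) => [<-|il]; first by rewrite mul0n mul1n add0n hmu.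
    by rewrite !mul0n.
  by rewrite submDA (addmC (U_(i) *+ a)%MM) mulr_natl.
move=> [j hj] /= hja; have hj2 : (j <= N)%N by rewrite -ltnS.
rewrite mulrnAr mcoeffMn !XUn -mpolyXD mcoeffMXg.
case: ifP => [/mnm_lepP hle|]; last by rewrite mul0rn.
suff -> : P@_(mu - (U_(c) *+ (N - j) + U_(i) *+ j)%MM) = 0 by rewrite mul0rn.
apply: memN_msupp_eq0; apply/negP => /hP.
have := hle i; rewrite mnmBE mnmDE !mulmnE !mnm1E ci eqxx /= mul0n mul1n add0n hmu.
move=> hji; have hne : j != a.
  by apply/eqP => hh; move: hja; rewrite -val_eqE /= hh eqxx.
lia.
Qed.

End Ideal.

Lemma two_pchar (A : lalgType 'F_2) : (2 \in [pchar A])%N.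
Proof. by rewrite pchar_lalg (@pchar_Fp 2). Qed.

Lemma diag_repX s (i : 'I_s) : diag_rep ('X_i : {mpoly 'F_2[s]}) = 'X.
Proof. by rewrite /diag_rep mmapX mmap1U. Qed.

Lemma diag_repM s (p q : {mpoly 'F_2[s]}) : diag_rep (p * q) = diag_rep p * diag_rep q.
Proof. by rewrite /diag_rep rmorphM. Qed.

Lemma zdXX m s (i j : 'I_s) : @zero_divisor m s ('X_i + 'X_j).
Proof.
rewrite /zero_divisor. have -> : diag_rep ('X_i + 'X_j : {mpoly 'F_2[s]}) = 0.
  have -> : diag_rep ('X_i + 'X_j : {mpoly 'F_2[s]}) = diag_rep ('X_i : {mpoly 'F_2[s]}) + diag_rep ('X_j : {mpoly 'F_2[s]}).
    by rewrite /diag_rep rmorphD.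
  by rewrite !diag_repX addrr_pchar2 // two_pchar.
exact: dvdp0.
Qed.

Lemma zdMr m s (p q : {mpoly 'F_2[s]}) : @zero_divisor m s p -> @zero_divisor m s (p * q).
Proof. by rewrite /zero_divisor diag_repM => h; apply: dvdp_mulr. Qed.

Lemma zdXn m s (p : {mpoly 'F_2[s]}) k : @zero_divisor m s p -> @zero_divisor m s (p ^+ k.+1).
Proof. by rewrite exprSr mulrC; apply: zdMr. Qed.

Lemma prod_nseq (R : comRingType) n (a : R) : \prod_(x <- nseq n a) x = a ^+ n.
Proof. by elim: n => [|n IH]; rewrite ?big_nil ?expr0 // big_cons IH exprS. Qed.

Section Zcl.
Variables (m s : nat).
Local Notation MP := {mpoly 'F_2[s]}.

Lemma witness_list (l : seq MP) :
  (forall x, x \in l -> @zero_divisor m s x) -> ~ @in_trunc_ideal m s (\prod_(x <- l) x) ->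
  zcl_witness m s (size l).
Proof.
move=> hz hn; exists (fun i => nth 0 l i); split.
  by move=> i; apply: hz; apply: mem_nth.
by move: hn; rewrite (big_nth 0) big_mkord.
Qed.

Lemma witness0 : zcl_witness m s 0.
Proof.
exists (fun _ => 0); split; first by case.
rewrite big_ord0; apply/notinI; exists 0%MM; split.
  by move=> i; rewrite mnm0E.
by rewrite mcoeff1 eqxx oner_neq0.
Qed.

Lemma zcl_ge k : zcl_witness m s k -> (k <= s * m)%N -> (k <= zcl m s)%N.
Proof.
move=> hw hk; rewrite -ltnS in hk.
have := @leq_bigmax_cond _ (fun i : 'I_(s * m).+1 => zcl_witnessb m s i) (fun i => nat_of_ord i) (Ordinal hk).
apply; rewrite /zcl_witnessb /=; case: excluded_middle_informative => //.
Qed.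

Lemma zcl_le : (zcl m s <= s * m)%N.
Proof. by apply/bigmax_leqP => i _; rewrite -ltnS. Qed.

Lemma zcl_attained : zcl_witness m s (zcl m s).
Proof.
have P0 : zcl_witnessb m s (@ord0 (s * m)).
  rewrite /zcl_witnessb; case: excluded_middle_informative => // H; exfalso; apply: H; exact: witness0.
rewrite /zcl (@bigop.bigmax_eq_arg _ ord0 (fun k : 'I_(s * m).+1 => zcl_witnessb m s k) (fun k => nat_of_ord k) P0).
case: arg_maxnP => // i Pi _.
by move: Pi; rewrite /zcl_witnessb; case: excluded_middle_informative.
Qed.

Lemma zcl_upper B : (forall k, zcl_witness m s k -> (k <= B)%N) -> (zcl m s <= B)%N.
Proof.
move=> h; apply/bigmax_leqP => i; rewrite /zcl_witnessb.
by case: excluded_middle_informative => // H _; apply: h.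
Qed.

End Zcl.

Lemma noninv_mwiden n (p : {mpoly 'F_2[n]}) : noninv (@ord_max n) (mwiden p).
Proof.
move=> nu; apply: contraTeq => hnu; rewrite -mcoeff_eq0.
rewrite (mwidenE (k := msize p)) // raddf_sum /= big1 // => mu _.
rewrite mcoeffZ mcoeffX; case: eqP => [hh|]; last by rewrite mulr0.
by move: hnu; rewrite -hh mnmwiden_ordmax eqxx.
Qed.

Lemma diag_rep_mwiden n (p : {mpoly 'F_2[n]}) : diag_rep (mwiden p) = diag_rep p.
Proof.
elim/mpolyind: p => [|c mu p _ _ IH].
  by rewrite raddf0 /diag_rep !raddf0.
have hD (s : nat) (a b : {mpoly 'F_2[s]}) : diag_rep (a + b) = diag_rep a + diag_rep b.
  by rewrite /diag_rep raddfD.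
rewrite raddfD /= !hD IH mwidenZ mwidenX; congr (_ + _).
rewrite /diag_rep !mmapZ !mmapX; congr (_ * _).
rewrite /mmap1 big_ord_recr /= mnmwiden_ordmax expr0 mulr1.
by apply: eq_bigr => i _; rewrite mnmwiden_widen.
Qed.

Lemma zcl_mono m n : (zcl m n.+1 + m <= zcl m n.+2)%N.
Proof.
have [f [hz hn]] := zcl_attained m n.+1.
set k := zcl m n.+1 in f hz hn *.
set y : {mpoly 'F_2[n.+2]} := 'X_(@ord_max n.+1) + 'X_(widen_ord (leqnSn n.+1) ord0).
set l := [seq mwiden (f i) | i <- enum 'I_k] ++ nseq m y.
have hsz : size l = (k + m)%N by rewrite size_cat size_map size_enum_ord size_nseq.
rewrite -hsz; apply: zcl_ge; last first.
  rewrite hsz; have := zcl_le m n.+1; rewrite -/k; nia.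
apply: witness_list.
  move=> x; rewrite mem_cat => /orP [/mapP [i _ ->]|].
    by rewrite /zero_divisor diag_rep_mwiden; apply: hz.
  by rewrite mem_nseq => /andP [_ /eqP ->]; apply: zdXX.
rewrite big_cat /= big_map big_enum /= prod_nseq -rmorph_prod.
move/notinI: hn => [mu [hmu hc]].
apply/notinI; exists (mnmwiden mu + U_(@ord_max n.+1) *+ m)%MM; split.
  move=> j; rewrite mnmDE mulmnE mnm1E.
  case: (unliftP ord_max j) => [j' ->|->].
    have -> : lift ord_max j' = widen_ord (leqnSn n.+1) j' by apply: val_inj; rewrite /= /bump leqNgt ltn_ord.
    rewrite mnmwiden_widen; case: eqP => [/(congr1 val)/=/eqP|]; last by rewrite mul0n addn0.
    by move=> /eqP h; have := ltn_ord j'; rewrite -h ltnn.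
  by have := mnmwiden_ordmax mu; move=> ->; rewrite eqxx mul1n.
rewrite (@leaf n.+2 _ _ _ m m); last first.
- by rewrite subnn.
- by [].
- by rewrite mnmDE mnmwiden_ordmax mulmnE mnm1E eqxx mul1n.
- exact: noninv_mwiden.
- by rewrite -val_eqE /=.
by rewrite binn mul1r subnn mulm0n subm0 addmK mwiden_mnmwiden.
Qed.

Lemma G_noninc m n : (G m n.+2 <= G m n.+1)%N.
Proof. rewrite /G; have := zcl_mono m n; have := zcl_le m n.+1; nia. Qed.

Lemma G_mono m s1 s2 : (1 <= s1)%N -> (s1 <= s2)%N -> (G m s2 <= G m s1)%N.
Proof.
move=> h1 /subnK <-; elim: (s2 - s1)%N => [|d IH] //=.
rewrite addSn; apply: leq_trans IH.
have : (1 <= d + s1)%N by lia.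
by case: (d + s1)%N => // x _; apply: G_noninc.
Qed.

Lemma eventually_const (f : nat -> nat) (s1 : nat) :
  (forall s, (s1 <= s)%N -> (f s.+1 <= f s)%N) ->
  exists s0 g, forall s, (s0 <= s)%N -> f s = g.
Proof.
move=> hmon.
have mono : forall a b, (s1 <= a)%N -> (a <= b)%N -> (f b <= f a)%N.
  move=> a b ha /subnK <-; elim: (b - a)%N => [|d IH] //=.
  by rewrite addSn; apply: leq_trans (hmon _ _) IH; rewrite (leq_trans ha) // leq_addl.
suff H : forall v a, (s1 <= a)%N -> (f a <= v)%N -> exists s0 g, forall s, (s0 <= s)%N -> f s = g.
  exact: (H (f s1) s1).
elim=> [|v IH] a ha hv.
  exists a, 0%N => s hs; have := mono _ _ ha hs; lia.
case: (classic (forall s, (a <= s)%N -> f s = f a)) => [H|].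
  by exists a, (f a).
move=> H; have [b Hb] := not_all_ex_not _ _ H.
have [hb hfb] := imply_to_and _ _ Hb.
apply: (IH b); first exact: leq_trans hb.
have := mono _ _ ha hb; lia.
Qed.

Section Part3.
Variables (t m d : nat).
Local Notation MP := {mpoly 'F_2[t.+1]}.
Local Notation N := (m + d)%N.
Hypothesis hC : ('C(N, m)%:R : 'F_2) = 1.

Let F (i : nat) : MP := ('X_(inord i) + 'X_(@ord_max t)) ^+ N.
Let mu (j : nat) : 'X_{1..t.+1} :=
  [multinom (if (i < j)%N then m else if (i == t :> nat) then (j * d)%N else 0%N) | i < t.+1].

Lemma coef_step j : (j <= t)%N -> (\prod_(0 <= i < j) F i)@_(mu j) = 1.
Proof.
elim: j => [|j IH] hj.
  rewrite big_geq // mcoeff1; have -> : mu 0 = 0%MM.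
    by apply/mnmP => i; rewrite mnmE mnm0E mul0n; case: ifP.
  by rewrite eqxx.
have hjt : (j < t)%N by [].
rewrite big_nat_recr //= (@leaf t.+1 _ (inord j) ord_max N m); last first.
- rewrite addKn mnmE /= eqxx ltnNge hjt /= mulSn; lia.
- by rewrite leq_addr.
- by rewrite mnmE inordK ?ltnSn //; lia.
- rewrite big_seq_cond; apply: (big_ind (noninv (inord j))); first exact: noninv1.
    exact: noninvM.
  move=> i; rewrite andbT mem_index_iota => /andP [_ hij].
  apply: noninvXn; apply: noninvD; apply: noninvX.
    by rewrite -val_eqE /= !inordK //; [rewrite neq_ltn hij | lia | lia].
  by rewrite -val_eqE /= inordK; [rewrite neq_ltn hjt orbT | lia].
- by rewrite -val_eqE /= inordK; [rewrite neq_ltn hjt | lia].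
rewrite hC mul1r addKn -[RHS](IH (ltnW hjt)); congr (_@__).
apply/mnmP => i; rewrite !mnmBE !mulmnE !mnm1E !mnmE.
have E1 : (@inord t j == i) = (j == i :> nat).
  by rewrite -val_eqE /= inordK //; lia.
have E2 : (@ord_max t == i) = (t == i :> nat) by rewrite -val_eqE.
rewrite E1 E2; have := ltn_ord i; move: (val i) => v hv.
case: (ltngtP v j) => [hvj|hvj|->].
- have -> : (v < j.+1)%N by lia.
  have -> : (t == v) = false by apply/negbTE; rewrite neq_ltn; lia.
  by rewrite !mul0n !subn0.
- have -> : (v < j.+1)%N = false by apply/negbTE; lia.
  rewrite mul0n subn0 [t == v]eq_sym; case: eqP => [_|_].
    by rewrite mul1n mulSn addKn.
  by rewrite mul0n.
- rewrite ltnSn mul1n subnn sub0n.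
  by have -> : (j == t) = false by apply/negbTE; rewrite neq_ltn hjt.
Qed.

Lemma main_coef :
  (\prod_(i < t) ('X_(widen_ord (leqnSn t) i) + 'X_(@ord_max t) : MP) ^+ N)
    @_[multinom (if (i < t)%N then m else (t * d)%N) | i < t.+1] = 1.
Proof.
have -> : [multinom (if (i < t)%N then m else (t * d)%N) | i < t.+1] = mu t.
  apply/mnmP => i; rewrite !mnmE; case: ifP => // /negbT; rewrite -leqNgt => h.
  by have -> : (i == t :> nat) by rewrite eqn_leq h -ltnS ltn_ord.
rewrite -(coef_step (leqnn t)) big_mkord; congr (_@__).
apply: eq_bigr => i _; rewrite /F; congr (('X__ + _) ^+ _).
by apply: val_inj; rewrite /= inordK // ltnS ltnW.
Qed.

Lemma main_notinI : (t * d <= m)%N ->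
  ~ @in_trunc_ideal m t.+1
      (\prod_(i < t) ('X_(widen_ord (leqnSn t) i) + 'X_(@ord_max t) : MP) ^+ N).
Proof.
move=> htd; apply/notinI; exists [multinom (if (i < t)%N then m else (t * d)%N) | i < t.+1].
split; first by move=> i; rewrite mnmE; case: ifP.
by rewrite main_coef oner_neq0.
Qed.

Lemma size_flatten_nseq (T : Type) (r : seq 'I_t) (g : 'I_t -> T) k :
  size (flatten [seq nseq k (g i) | i <- r]) = (size r * k)%N.
Proof. by elim: r => [|x r IH] //=; rewrite size_cat size_nseq IH mulSn. Qed.

Lemma main_witness : (t * d <= m)%N -> zcl_witness m t.+1 (t * N).
Proof.
move=> htd.
set l := flatten [seq nseq N ('X_(widen_ord (leqnSn t) i) + 'X_(@ord_max t) : MP) | i <- enum 'I_t].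
have -> : (t * N)%N = size l by rewrite size_flatten_nseq size_enum_ord.
apply: witness_list.
  move=> x /flattenP [y /mapP [i _ ->]]; rewrite mem_nseq => /andP [_ /eqP ->].
  exact: zdXX.
rewrite big_flatten /= big_map.
under eq_bigr => i _ do rewrite prod_nseq.
by rewrite big_enum /=; apply: main_notinI.
Qed.

End Part3.

Section Upper.
Variables (m n : nat).
Local Notation MP := {mpoly 'F_2[n.+1]}.
Local Notation o := (@ord0 n).
Local Notation I := (@in_trunc_ideal m n.+1).

Definition hpsi (i : 'I_n.+1) : MP := if i == o then 'X_i else 'X_i + 'X_o.
Definition psi (p : MP) : MP := mmap (@mpolyC n.+1 'F_2) hpsi p.
Definition hth (i : 'I_n.+1) : {poly 'F_2} := if i == o then 'X else 0.
Definition theta (p : MP) : {poly 'F_2} := mmap (@polyC 'F_2) hth p.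

Lemma psiX i : psi 'X_i = hpsi i.
Proof. by rewrite /psi mmapX mmap1U. Qed.

Lemma psiM p q : psi (p * q) = psi p * psi q.
Proof. by rewrite /psi rmorphM. Qed.

Lemma psi_prod k (F : 'I_k -> MP) : psi (\prod_(i < k) F i) = \prod_(i < k) psi (F i).
Proof. by rewrite /psi rmorph_prod. Qed.

Lemma psiXg q k : psi (q ^+ k) = psi q ^+ k.
Proof. by rewrite /psi rmorphXn. Qed.

Lemma psiXn i k : psi ('X_i ^+ k) = hpsi i ^+ k.
Proof. by rewrite psiXg psiX. Qed.

Lemma psiZ c p : psi (c *: p) = c *: psi p.
Proof. by rewrite /psi mmapZ /= mul_mpolyC. Qed.

Lemma psiD p q : psi (p + q) = psi p + psi q.
Proof. by rewrite /psi raddfD. Qed.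

Lemma psi_sum (T : Type) (r : seq T) (F : T -> MP) : psi (\sum_(x <- r) F x) = \sum_(x <- r) psi (F x).
Proof. by rewrite /psi raddf_sum. Qed.

Lemma psi_hpsi i : psi (hpsi i) = 'X_i.
Proof.
rewrite /hpsi; case: eqP => [->|/eqP h]; first by rewrite psiX /hpsi eqxx.
rewrite psiD !psiX /hpsi eqxx (negbTE h).
by rewrite -addrA addrr_pchar2 ?addr0 // two_pchar.
Qed.

Lemma psi_psi p : psi (psi p) = p.
Proof.
elim/mpolyind: p => [|c mu p _ _ IH]; first by rewrite /psi !raddf0.
rewrite !psiD !psiZ IH; congr (_ *: _ + _).
rewrite mpolyXE_id !psi_prod; apply: eq_bigr => i _.
by rewrite !psiXg psiX psi_hpsi.
Qed.

Lemma inIXi i : I ('X_i ^+ m.+1).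
Proof. rewrite XUn; apply: (@inIX m n.+1 _ i); by rewrite mulmnE mnm1E eqxx mul1n. Qed.

Lemma psi_I e : m.+1 = (2 ^ e)%N -> forall p, I p -> I (psi p).
Proof.
move=> hm p [q ->]; rewrite psi_sum; apply: inI_sum => i.
rewrite psiM psiXn; apply: inIMl.
rewrite /hpsi; case: eqP => _; first exact: inIXi.
rewrite hm exprDn_pchar; first by rewrite -hm; apply: inID; apply: inIXi.
rewrite pnatX; apply/orP; left.
by rewrite (pnatE _ (isT : prime 2)) two_pchar.
Qed.

Lemma thetaZ c p : theta (c *: p) = c%:P * theta p.
Proof. by rewrite /theta mmapZ. Qed.

Lemma thetaD p q : theta (p + q) = theta p + theta q.
Proof. by rewrite /theta raddfD. Qed.

Lemma theta_prod k (F : 'I_k -> MP) : theta (\prod_(i < k) F i) = \prod_(i < k) theta (F i).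
Proof. by rewrite /theta rmorph_prod. Qed.

Lemma thetaXg q k : theta (q ^+ k) = theta q ^+ k.
Proof. by rewrite /theta rmorphXn. Qed.

Lemma thetaX i : theta 'X_i = hth i.
Proof. by rewrite /theta mmapX mmap1U. Qed.

Lemma theta_psi p : theta (psi p) = diag_rep p.
Proof.
elim/mpolyind: p => [|c mu p _ _ IH]; first by rewrite /psi /theta /diag_rep !raddf0.
have hD (q1 q2 : MP) : diag_rep (q1 + q2) = diag_rep q1 + diag_rep q2 by rewrite /diag_rep raddfD.
rewrite hD -IH psiD thetaD psiZ thetaZ.
rewrite /diag_rep mmapZ -/(diag_rep _); congr (_ * _ + _).
rewrite /diag_rep mmapX mpolyXE_id psi_prod theta_prod /mmap1; apply: eq_bigr => i _.
rewrite psiXg thetaXg psiX; congr (_ ^+ _).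
rewrite /hpsi; case: eqP => [->|/eqP h]; first by rewrite thetaX /hth eqxx.
by rewrite thetaD !thetaX /hth eqxx (negbTE h) add0r.
Qed.

Lemma mmap1_hth (nu : 'X_{1..n.+1}) j : (mmap1 hth nu)`_j = (nu == U_(o) *+ j)%MM%:R.
Proof.
have lo : forall i, (lift o i == o) = false by move=> i; rewrite eq_sym; apply/negbTE/neq_lift.
rewrite /mmap1 big_ord_recl /hth eqxx.
case: (boolP [forall i : 'I_n, nu (lift o i) == 0%N]) => [/forallP H|/forallP H].
  rewrite big1 ?mulr1; last first.
    by move=> i _; rewrite lo (eqP (H i)) expr0.
  rewrite coefXn; suff -> : (j == nu o) = (nu == (U_(o) *+ j)%MM) by [].
  apply/idP/idP => /eqP hh.
    apply/eqP/mnmP => i; rewrite mulmnE mnm1E; case: (unliftP o i) => [i' ->|->].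
      by rewrite (eqP (H i')) (negbTE (neq_lift _ _)).
    by rewrite eqxx mul1n hh.
  by apply/eqP; rewrite hh mulmnE mnm1E eqxx mul1n.
have [i hi] : exists i, nu (lift o i) != 0%N.
  by apply/existsP; rewrite -negb_forall; apply/negP => /forallP hh; apply: H => i; apply: hh.
rewrite (bigD1 i) //= expr0n (negbTE hi) mul0r mulr0 coef0.
case: eqP => // hnu; move: hi; rewrite hnu mulmnE mnm1E (negbTE (neq_lift _ _)) mul0n.
by rewrite eqxx.
Qed.

Lemma sum_msupp_ind (q : MP) mu :
  \sum_(nu <- msupp q) q@_nu * (nu == mu)%:R = q@_mu.
Proof.
rewrite [in RHS](mpolyE q) raddf_sum /=; apply: eq_bigr => nu _.
by rewrite mcoeffZ mcoeffX.
Qed.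

Lemma coef_theta q j : (theta q)`_j = q@_(U_(o) *+ j).
Proof.
rewrite /theta /mmap coef_sum -sum_msupp_ind; apply: eq_bigr => nu _.
by rewrite coefCM mmap1_hth.
Qed.

Definition wt (nu : 'X_{1..n.+1}) := (\sum_(i < n) nu (lift o i))%N.

Lemma wtD a b : wt (a + b)%MM = (wt a + wt b)%N.
Proof. by rewrite /wt -big_split; apply: eq_bigr => i _; rewrite mnmDE. Qed.

Definition good k (q : MP) :=
  forall nu, nu \in msupp q -> (k <= wt nu)%N \/ exists i, (m < nu i)%N.

Lemma good0 : good 0 1.
Proof. by move=> nu _; left. Qed.

Lemma goodM a b p q : good a p -> good b q -> good (a + b) (p * q).
Proof.
move=> hp hq nu /msuppM_le /allpairsP [[x y] /= [hx hy ->]].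
case: (hp x hx) => [h1|[i hi]]; last first.
  by right; exists i; rewrite mnmDE; apply: leq_trans hi (leq_addr _ _).
case: (hq y hy) => [h2|[i hi]]; last first.
  by right; exists i; rewrite mnmDE; apply: leq_trans hi (leq_addl _ _).
by left; rewrite wtD leq_add.
Qed.

Lemma good_zd p : @zero_divisor m n.+1 p -> good 1 (psi p).
Proof.
rewrite /zero_divisor -theta_psi => /dvdpP [r hr] nu hnu.
case: (posnP (wt nu)) => [h0|]; last by left.
right; exists o; rewrite ltnNge; apply/negP => hle.
move: hnu; rewrite mcoeff_msupp.
have -> : nu = (U_(o) *+ nu o)%MM.
  apply/mnmP => i; rewrite mulmnE mnm1E; case: (unliftP o i) => [i' ->|->].
    rewrite (negbTE (neq_lift _ _)) mul0n; apply/eqP; rewrite -leqn0 -h0 /wt.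
    by rewrite (bigD1 i') //= leq_addr.
  by rewrite eqxx mul1n.
by rewrite -coef_theta hr coefMXn ltnS hle eqxx.
Qed.

Lemma good_prod k (F : 'I_k -> MP) : (forall i, good 1 (F i)) -> good k (\prod_(i < k) F i).
Proof.
elim: k F => [|k IH] F hF; first by rewrite big_ord0; apply: good0.
rewrite big_ord_recr /=.
have := goodM (IH (fun i => F (widen_ord (leqnSn k) i)) (fun i => hF _)) (hF ord_max).
by rewrite addn1.
Qed.

Lemma good_I k q : (n * m < k)%N -> good k q -> I q.
Proof.
move=> hk hq; apply/inI_coef => mu hmu; apply: memN_msupp_eq0; apply/negP => /hq [h|[i hi]].
  have : (wt mu <= n * m)%N.
    rewrite /wt -[X in (_ <= X * _)%N]card_ord -sum_nat_const.
    by apply: leq_sum => i _; apply: hmu.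
  lia.
by have := hmu i; lia.
Qed.

Lemma zcl_upper_pow e : m.+1 = (2 ^ e)%N -> (zcl m n.+1 <= n * m)%N.
Proof.
move=> hm; apply: zcl_upper => k [f [hz hn]]; rewrite leqNgt; apply/negP => hk.
apply: hn; rewrite -[X in I X]psi_psi; apply: (psi_I hm).
rewrite psi_prod; apply: (good_I hk); apply: good_prod => i; apply: good_zd; apply: hz.
Qed.

End Upper.

Theorem theorem4p5 (m e : nat) :
  (1 <= m)%N ->
  (m %% 2 ^ e.+1 = 2 ^ e - 1)%N ->
  [/\ (exists g : nat,
         [/\ G_stable m g, (g <= 2 ^ e - 1)%N &
             (~~ odd m \/ m = (2 ^ e - 1)%N -> g = (2 ^ e - 1)%N)]),
      (forall s : nat, (maxn ((m + 1) %/ 2 ^ e) 2 <= s)%N -> (G m s <= 2 ^ e - 1)%N) &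
      ((2 ^ e - 1 < m)%N ->
       let sigma := ((m + 1) %/ 2 ^ e)%N in
       (* variables x_1..x_sigma are 'X_0 .. 'X_t with t = sigma - 1 *)
       let t := sigma.-1 in
       [/\ (2 < sigma)%N,
           (forall i : 'I_t,
              @zero_divisor m t.+1
                (('X_(widen_ord (leqnSn t) i) + 'X_(@ord_max t)) ^+ (m + 2 ^ e))) &
           ~ @in_trunc_ideal m t.+1
               (\prod_(i < t)
                  ('X_(widen_ord (leqnSn t) i) + 'X_(@ord_max t)
                     : {mpoly 'F_2[t.+1]}) ^+ (m + 2 ^ e))])].
Proof.
move=> hm1 hmod.
set d := (2 ^ e)%N.
have hd : (0 < d)%N by rewrite expn_gt0.
have hmod' : (m %% (2 * d) = d - 1)%N by rewrite /d -expnS.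
set q := (m %/ (2 * d))%N.
have hmq : m = (q * (2 * d) + (d - 1))%N.
  by rewrite {1}(divn_eq m (2 * d)) hmod'.
have hsig : ((m + 1) %/ d = (2 * q).+1)%N.
  have -> : (m + 1 = (2 * q).+1 * d)%N by rewrite hmq; nia.
  by rewrite mulnK.
have hA : ((2 * q) * d = q * (2 * d))%N by rewrite -mulnA mulnCA.
have hC : ('C(m + d, m)%:R : 'F_2) = 1.
  rewrite F2_nat -bin_sub ?leq_addr // addKn.
  have -> : (m + d = (2 * q).+1 * d + (d - 1))%N by rewrite hmq; nia.
  by rewrite bin_pow2_odd //= oddM.
have P2 : forall s : nat, (maxn ((m + 1) %/ d) 2 <= s)%N -> (G m s <= d - 1)%N.
  move=> s; rewrite hsig geq_max => /andP [h1 h2].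
  case: (posnP q) => [q0|qpos].
    apply: leq_trans (G_mono m (leqnn 1) (ltnW h2)) _.
    by rewrite /G mul1n; move: hmq; rewrite q0 mul0n add0n => ->; apply: leq_subr.
  apply: leq_trans (G_mono m (isT : (0 < (2 * q).+1)%N) h1) _.
  have hw' : ((2 * q) * d <= m)%N by rewrite hA; move: hmq; lia.
  have hh : ((2 * q) * (m + d) <= (2 * q).+1 * m)%N.
    by rewrite mulnDr mulSn hA addnC leq_add2r; move: hmq; lia.
  have hz := zcl_ge (main_witness hC hw') hh.
  rewrite /G; move: hz; rewrite mulnDr mulSn hA; move: hmq; lia.
split.
- have [s0 [g hg]] := eventually_const (f := G m) (s1 := 1) (fun s hs => G_mono m hs (leqnSn s)).
  exists g; split.
  + by exists s0.
  + rewrite -(hg (maxn s0 (maxn ((m + 1) %/ d) 2))) ?leq_maxl //; apply: P2; exact: leq_maxr.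
  + move=> [hodd|hmd].
      have e0 : e = 0%N.
        case: (posnP e) => // epos; exfalso; move/negP: hodd; apply.
        rewrite hmq oddD oddM [odd (2 * d)]oddM andbF oddB // /d oddX.
        by rewrite (negbTE (lt0n_neq0 epos)).
      have := hg (maxn s0 (maxn ((m + 1) %/ d) 2)) (leq_maxl _ _).
      have := P2 _ (leq_maxr s0 (maxn ((m + 1) %/ d) 2)).
      rewrite /d e0 expn0 subnn; lia.
    have hm2 : m.+1 = (2 ^ e)%N by rewrite hmd -/d; lia.
    rewrite -hmd -(hg (maxn s0 1)) ?leq_maxl //.
    have : (0 < maxn s0 1)%N by rewrite leq_max orbT.
    case: (maxn s0 1) => // n _.
    apply/eqP; rewrite eqn_leq; apply/andP; split.
      apply: leq_trans (G_mono m (leqnn 1) (isT : (1 <= n.+1)%N)) _.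
      by rewrite /G mul1n leq_subr.
    have := zcl_upper_pow n hm2; rewrite /G mulSn; lia.
- exact: P2.
move=> hlt; rewrite hsig /=.
have qpos : (0 < q)%N.
  by rewrite lt0n; apply/eqP => q0; move: hlt hmq; rewrite q0 mul0n add0n => h1 h2; move: h1; rewrite h2 ltnn.
split.
- by rewrite ltnS; lia.
- move=> i; have -> : (m + 2 ^ e = (m + 2 ^ e - 1).+1)%N by rewrite -/d; lia.
  by apply: zdXn; apply: zdXX.
apply: main_notinI => //; rewrite hA; move: hmq; lia.
Qed.
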